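(* Let $\mathcal D[t]\subset\mathcal H\subset\mathcal D^\times[t^\times]$ be a rigged Hilbert space with $\mathcal D[t]$ a reflexive Fréchet space, $(X,\mu)$ a $\sigma$-finite measure space, $\omega:X\to\mathcal D^\times$ a Riesz distribution basis and $\theta$ its dual. For measurable $m:X\to\mathbb C$ write $M_m:=M_{m,\omega,\theta}$. If $m_1,m_2$ are measurable functions with $M_{m_1},M_{m_2}\in\mathcal L^\dagger(\mathcal D)$, then for every $f\in\mathcal D$ one has $f\in D(M_{m_1m_2})$ and $M_{m_1}M_{m_2}f=M_{m_1m_2}f$.
   Context: Rigged Hilbert space: $\mathcal D$ dense subspace of Hilbert space $\mathcal H$ with a locally convex topology finer than the norm topology, $\mathcal D^\times$ its conjugate dual with strong dual topology, $\mathcal H\subset\mathcal D^\times$, pairing extending the inner product, $\langle f,F\rangle:=\overline{\langle F,f\rangle}$. Weakly measurable map $\omega:X\to\mathcal D^\times$: $x\mapsto\langle f,\omega_x\rangle$ measurable for all $f\in\mathcal D$. Distribution frame: there are $A,B>0$ with $A\|f\|^2\le\int_X|\langle f,\omega_x\rangle|^2d\mu\le B\|f\|^2$ for $f\in\mathcal D$. $\omega$ is $\mu$-independent if the only measurable $\xi$ with $\int_X\xi(x)\langle g,\omega_x\rangle d\mu=0$ for all $g\in\mathcal D$ is $\xi=0$ a.e. A Riesz distribution basis is a $\mu$-independent distribution frame; its dual $\theta:X\to\mathcal D^\times$ is the unique distribution frame with $\langle f,g\rangle=\int_X\langle f,\theta_x\rangle\langle\omega_x,g\rangle d\mu$ for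 all $f,g\in\mathcal D$ (it is also a Riesz distribution basis and $\omega$ is its dual). Distribution multiplier $M_{m,\omega,\theta}$: domain is the set of $f\in\mathcal D$ such that $\int_X m(x)\langle f,\omega_x\rangle\langle\theta_x,g\rangle d\mu$ converges for all $g\in\mathcal D$ and is bounded in $g$ w.r.t. the $\mathcal H$-norm; $M_{m,\omega,\theta}f\in\mathcal H$ is its Riesz representative. $\mathcal L^\dagger(\mathcal D)$ is the set of closable operators $A$ in $\mathcal H$ with $D(A)=\mathcal D$, $D(A^* )\supseteq\mathcal D$, and $A\mathcal D\subseteq\mathcal D$, $A^*\mathcal D\subseteq\mathcal D$. *)

(* Defs.v *)
From mathcomp Require Import all_boot all_algebra.
From mathcomp Require Import complex.
From mathcomp Require Import all_classical all_reals all_analysis.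
Set Implicit Arguments. Unset Strict Implicit. Unset Printing Implicit Defensive.
Import GRing.Theory Num.Theory.
Local Open Scope ring_scope.
Local Open Scope classical_set_scope.

Section RHS.
Context {R : realType}.
Local Notation C := R[i].

Definition cmod (z : C) : R := Num.sqrt (complex.Re z ^+ 2 + complex.Im z ^+ 2).

Context {V : lmodType C}.

Definition inner_product (ip : V -> V -> C) : Prop :=
  [/\ (forall (a : C) (x y z : V), ip (a *: x + y) z = a * ip x z + ip y z),
      (forall x y : V, ip y x = (ip x y)^*),
      (forall x : V, complex.Im (ip x x) = 0 /\ 0 <= complex.Re (ip x x)) &
      (forall x : V, ip x x = 0 -> x = 0)].

Definition hnorm (ip : V -> V -> C) (x : V) : R := Num.sqrt (complex.Re (ip x x)).

Definition hcvg (ip : V -> V -> C) (u : nat -> V) (l : V) : Prop :=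
  forall e : R, 0 < e -> exists N : nat, forall n, (N <= n)%N -> hnorm ip (u n - l) < e.

Definition hilbert_space (ip : V -> V -> C) : Prop :=
  inner_product ip /\
  (forall u : nat -> V,
     (forall e : R, 0 < e -> exists N : nat, forall n m, (N <= n)%N -> (N <= m)%N ->
        hnorm ip (u n - u m) < e) ->
     exists l : V, hcvg ip u l).

(** ---------- the Frechet space D[t] ----------
   D is a subspace of H (given as a predicate), and its locally convex
   topology t is the one generated by the countable family of seminorms
   p 0, p 1, ... (Frechet = complete metrizable locally convex space). *)
Definition pmax (p : nat -> V -> R) (n : nat) (x : V) : R :=
  \big[Num.max/0]_(k < n.+1) p k x.

Definition frechet_space (D : V -> Prop) (p : nat -> V -> R) : Prop :=
  [/\ (D 0 /\ (forall (a : C) x y, D x -> D y -> D (a *: x + y))),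
      [/\ (forall n x, D x -> 0 <= p n x),
           (forall n x y, D x -> D y -> p n (x + y) <= p n x + p n y) &
           (forall n (a : C) x, D x -> p n (a *: x) = cmod a * p n x)],
      (forall x, D x -> (forall n, p n x = 0) -> x = 0) &
      (forall u : nat -> V, (forall k, D (u k)) ->
        (forall n (e : R), 0 < e -> exists N : nat, forall k l, (N <= k)%N -> (N <= l)%N ->
            p n (u k - u l) < e) ->
        exists2 x, D x & forall n (e : R), 0 < e -> exists N : nat, forall k, (N <= k)%N ->
            p n (u k - x) < e)].

(** conjugate dual D^x: continuous conjugate-linear functionals on D[t].
   A functional F is represented by f |-> <F, f>; the pairing extends the
   inner product (h in H corresponds to f |-> ip h f). *)
Definition conj_dual (D : V -> Prop) (p : nat -> V -> R) (F : V -> C) : Prop :=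
  (forall (a : C) x y, D x -> D y -> F (a *: x + y) = a^* * F x + F y) /\
  (exists (n : nat) (c : R), forall x, D x -> cmod (F x) <= c * pmax p n x).

Definition tbounded (D : V -> Prop) (p : nat -> V -> R) (B : V -> Prop) : Prop :=
  (forall x, B x -> D x) /\ (forall n, exists c : R, forall x, B x -> p n x <= c).

(** bounded subsets of D^x[t^x] (strong dual topology: uniform convergence
   on bounded subsets of D[t]) *)
Definition sbounded (D : V -> Prop) (p : nat -> V -> R) (BB : (V -> C) -> Prop) : Prop :=
  (forall F, BB F -> conj_dual D p F) /\
  (forall B, tbounded D p B -> exists c : R, forall F x, BB F -> B x -> cmod (F x) <= c).

Definition bidual (D : V -> Prop) (p : nat -> V -> R) (Phi : (V -> C) -> C) : Prop :=
  (forall (a : C) F G, conj_dual D p F -> conj_dual D p G ->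
      Phi (fun x => a * F x + G x) = a^* * Phi F + Phi G) /\
  (exists2 B, tbounded D p B & exists c : R, forall F (s : R), conj_dual D p F -> 0 <= s ->
      (forall x, B x -> cmod (F x) <= s) -> cmod (Phi F) <= c * s).

(** reflexivity: the canonical map J : D -> D^xx, J f = (F |-> conj <F,f>),
   is onto and a topological isomorphism onto D^xx with its strong topology
   (uniform convergence on strongly bounded subsets of D^x). *)
Definition reflexive (D : V -> Prop) (p : nat -> V -> R) : Prop :=
  [/\ (forall Phi, bidual D p Phi ->
          exists2 x, D x & forall F, conj_dual D p F -> Phi F = (F x)^*),
      (forall BB, sbounded D p BB -> exists (n : nat) (c : R),
          forall F x, BB F -> D x -> cmod (F x) <= c * pmax p n x) &
      (forall n : nat, exists2 BB, sbounded D p BB & exists c : R,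
          forall x (s : R), D x -> 0 <= s -> (forall F, BB F -> cmod (F x) <= s) ->
             p n x <= c * s)].

(** rigged Hilbert space D[t] c H c D^x[t^x] with D[t] reflexive Frechet:
   D dense in H, topology t finer than the norm topology. *)
Definition rigged_reflexive_frechet (ip : V -> V -> C) (D : V -> Prop)
    (p : nat -> V -> R) : Prop :=
  [/\ hilbert_space ip, frechet_space D p, reflexive D p,
      (exists (n : nat) (c : R), forall x, D x -> hnorm ip x <= c * pmax p n x) &
      (forall (h : V) (e : R), 0 < e -> exists2 x, D x & hnorm ip (h - x) < e)].

(** ---------- operators, L^dagger(D) ----------
   A (possibly unbounded) linear operator in H is given by its graph
   A : V -> V -> Prop (A f h  means  f in D(A) and A f = h). *)
Definition lin_operator (A : V -> V -> Prop) : Prop :=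
  (forall f h h', A f h -> A f h' -> h = h') /\
  (forall (a : C) f h f' h', A f h -> A f' h' -> A (a *: f + f') (a *: h + h')).

Definition closable (ip : V -> V -> C) (A : V -> V -> Prop) : Prop :=
  forall (u v : nat -> V) (k : V), (forall n, A (u n) (v n)) ->
    hcvg ip u 0 -> hcvg ip v k -> k = 0.

(** graph of the adjoint: A^* g = k *)
Definition adjoint (ip : V -> V -> C) (A : V -> V -> Prop) (g k : V) : Prop :=
  forall f h, A f h -> ip h g = ip f k.

Definition Ldagger (ip : V -> V -> C) (D : V -> Prop) (A : V -> V -> Prop) : Prop :=
  [/\ lin_operator A /\ closable ip A,
      (forall f, (exists h, A f h) <-> D f),
      (forall f h, A f h -> D h),
      (forall g, D g -> exists k, adjoint ip A g k) &
      (forall g k, D g -> adjoint ip A g k -> D k)].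

Context {d : measure_display} {X : measurableType d}.

Definition cmeasurable (u : X -> C) : Prop :=
  measurable_fun setT (fun x => complex.Re (u x)) /\
  measurable_fun setT (fun x => complex.Im (u x)).

Definition cintegrable (mu : {measure set X -> \bar R}) (u : X -> C) : Prop :=
  mu.-integrable setT (fun x => (complex.Re (u x))%:E) /\
  mu.-integrable setT (fun x => (complex.Im (u x))%:E).

Definition cint (mu : {measure set X -> \bar R}) (u : X -> C) : C :=
  @Complex R (fine (\int[mu]_x (complex.Re (u x))%:E)) (fine (\int[mu]_x (complex.Im (u x))%:E)).

(** omega : X -> D^x, weakly measurable; omega x f = <omega_x, f>, so that
   <f, omega_x> = (omega x f)^* *)
Definition weakly_measurable (D : V -> Prop) (p : nat -> V -> R) (om : X -> V -> C) : Prop :=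
  (forall x, conj_dual D p (om x)) /\
  (forall f, D f -> cmeasurable (fun x => (om x f)^*)).

Definition distribution_frame (ip : V -> V -> C) (D : V -> Prop) (p : nat -> V -> R)
    (mu : {measure set X -> \bar R}) (om : X -> V -> C) : Prop :=
  weakly_measurable D p om /\
  exists (A B : R), [/\ 0 < A, 0 < B & forall f, D f ->
    ((A * hnorm ip f ^+ 2)%:E <= \int[mu]_x ((cmod (om x f)) ^+ 2)%:E)%E /\
    (\int[mu]_x ((cmod (om x f)) ^+ 2)%:E <= (B * hnorm ip f ^+ 2)%:E)%E].

Definition mu_independent (D : V -> Prop) (mu : {measure set X -> \bar R})
    (om : X -> V -> C) : Prop :=
  forall xi : X -> C, cmeasurable xi ->
    (forall g, D g -> cintegrable mu (fun x => xi x * (om x g)^*) /\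
                     cint mu (fun x => xi x * (om x g)^*) = 0) ->
    {ae mu, forall x, xi x = 0}.

Definition riesz_distribution_basis (ip : V -> V -> C) (D : V -> Prop) (p : nat -> V -> R)
    (mu : {measure set X -> \bar R}) (om : X -> V -> C) : Prop :=
  distribution_frame ip D p mu om /\ mu_independent D mu om.

Definition dual_basis (ip : V -> V -> C) (D : V -> Prop) (p : nat -> V -> R)
    (mu : {measure set X -> \bar R}) (om th : X -> V -> C) : Prop :=
  distribution_frame ip D p mu th /\
  forall f g, D f -> D g ->
    cintegrable mu (fun x => (th x f)^* * om x g) /\
    ip f g = cint mu (fun x => (th x f)^* * om x g).

(** graph of the distribution multiplier M_{m,omega,theta}:
   mult_graph m f h  means  f in D(M_m) and M_m f = h *)
Definition mult_graph (ip : V -> V -> C) (D : V -> Prop) (mu : {measure set X -> \bar R})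
    (om th : X -> V -> C) (m : X -> C) (f h : V) : Prop :=
  [/\ D f,
      (forall g, D g -> cintegrable mu (fun x => m x * (om x f)^* * th x g)),
      (exists c : R, forall g, D g ->
          cmod (cint mu (fun x => m x * (om x f)^* * th x g)) <= c * hnorm ip g) &
      (forall g, D g -> ip h g = cint mu (fun x => m x * (om x f)^* * th x g))].

End RHS.

(* Main.v *)
Require Import Defs.
From mathcomp Require Import all_boot all_algebra.
From mathcomp Require Import complex.
From mathcomp Require Import all_classical all_reals all_analysis.
From mathcomp Require Import measurable_realfun.
From mathcomp Require Import ring.
Import GRing.Theory Num.Theory.
Local Open Scope ring_scope.
Local Open Scope classical_set_scope.

Section H.
Context {R : realType} {d : measure_display} {X : measurableType d}
  (mu : {measure set X -> \bar R}).

Lemma ReM (a b : R[i]) : complex.Re (a * b) = complex.Re a * complex.Re b - complex.Im a * complex.Im b.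
Proof. by case: a => ? ?; case: b => ? ?. Qed.
Lemma ImM (a b : R[i]) : complex.Im (a * b) = complex.Re a * complex.Im b + complex.Im a * complex.Re b.
Proof. by case: a => ? ?; case: b => ? ?. Qed.
Lemma ReC (a : R[i]) : complex.Re (a^*) = complex.Re a.
Proof. by case: a. Qed.
Lemma ImC (a : R[i]) : complex.Im (a^*) = - complex.Im a.
Proof. by case: a. Qed.
Lemma ReB (a b : R[i]) : complex.Re (a - b) = complex.Re a - complex.Re b.
Proof. by case: a => ? ?; case: b => ? ?. Qed.
Lemma ImB (a b : R[i]) : complex.Im (a - b) = complex.Im a - complex.Im b.
Proof. by case: a => ? ?; case: b => ? ?. Qed.

Lemma rint_sub (u v : X -> R) :
  mu.-integrable setT (fun x => (u x)%:E) -> mu.-integrable setT (fun x => (v x)%:E) ->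
  mu.-integrable setT (fun x => (u x - v x)%:E) /\
  fine (\int[mu]_x (u x - v x)%:E) = fine (\int[mu]_x (u x)%:E) - fine (\int[mu]_x (v x)%:E).
Proof.
move=> iu iv.
have iB := integrableB measurableT iu iv.
split.
  by apply: (eq_integrable measurableT) iB => x _ /=; rewrite EFinB.
rewrite (_ : (fun x => (u x - v x)%:E) = (EFin \o u) \- (EFin \o v))%E; last first.
  by apply/funext => x /=; rewrite EFinB.
rewrite (integralB measurableT iu iv).
by rewrite fineB //; exact: integrable_fin_num.
Qed.

Lemma rint_opp (u : X -> R) :
  mu.-integrable setT (fun x => (u x)%:E) ->
  mu.-integrable setT (fun x => (- u x)%:E) /\
  fine (\int[mu]_x (- u x)%:E) = - fine (\int[mu]_x (u x)%:E).
Proof.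
move=> iu.
have i0 : mu.-integrable setT (fun x => (0:R)%:E) by exact: (integrable0 mu setT).
have [h1 h2] := @rint_sub (fun _ => 0) u i0 iu.
have E : (fun x => (0 - u x)%:E) = (fun x => (- u x)%:E) by apply/funext => x; rewrite sub0r.
rewrite E in h1 h2; split => //; rewrite h2 integral0 /= sub0r //.
Qed.

Lemma mabs (v : X -> R) : measurable_fun setT v -> measurable_fun setT (fun x => `|(v x)%:E|%E).
Proof. move=> mv. apply: measurableT_comp => //. exact: measurableT_comp. Qed.

Lemma rint_ae (u v : X -> R) :
  mu.-integrable setT (fun x => (u x)%:E) -> measurable_fun setT v ->
  {ae mu, forall x, u x = v x} ->
  mu.-integrable setT (fun x => (v x)%:E) /\
  fine (\int[mu]_x (v x)%:E) = fine (\int[mu]_x (u x)%:E).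
Proof.
move=> iu mv ae.
have mu' : measurable_fun setT u by apply/measurable_realfun.measurable_EFinP; exact: (measurable_int _ iu).
have mv' := (@measurable_realfun.measurable_EFinP _ _ _ setT v).2 mv.
have aeE : ae_eq mu setT (fun x => (u x)%:E) (fun x => (v x)%:E).
  by apply: filterS ae => x /= -> _.
have aeA : ae_eq mu setT (fun x => `|(u x)%:E|%E) (fun x => `|(v x)%:E|%E).
  by apply: filterS ae => x /= -> _.
split.
  apply/integrableP; split => //.
  have iu0 := iu; move/integrableP: iu => [_ iu].
  rewrite (ae_eq_integral (fun x => `|(u x)%:E|%E)) //.
  - exact: mabs.
  - exact: mabs.
  - by symmetry.
rewrite (ae_eq_integral (fun x => (u x)%:E)) //.
- exact: (measurable_int _ iu).
- by symmetry.
Qed.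

Lemma cplxB (a b c e : R) : (Complex a b) - (Complex c e) = Complex (a - c) (b - e) :> R[i].
Proof. by []. Qed.

Lemma cmeas_conj (u : X -> R[i]) : cmeasurable u -> cmeasurable (fun x => (u x)^*).
Proof.
move=> [h1 h2]; split.
  by rewrite (_ : (fun x => _) = (fun x => complex.Re (u x))) //; apply/funext => x; rewrite ReC.
rewrite (_ : (fun x => _) = \- (fun x => complex.Im (u x))); last by apply/funext => x; rewrite ImC.
exact: measurable_funN.
Qed.

Lemma cmeas_conj' (u : X -> R[i]) : cmeasurable (fun x => (u x)^*) -> cmeasurable u.
Proof.
move=> /cmeas_conj; rewrite (_ : (fun x => _) = u) //; apply/funext => x; exact: conjCK.
Qed.

Lemma cmeasB (u v : X -> R[i]) : cmeasurable u -> cmeasurable v -> cmeasurable (fun x => u x - v x).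
Proof.
move=> [u1 u2] [v1 v2]; split.
  rewrite (_ : (fun x => _) = (fun x => complex.Re (u x)) \- (fun x => complex.Re (v x))); last by apply/funext => x; rewrite ReB.
  exact: measurable_funB.
rewrite (_ : (fun x => _) = (fun x => complex.Im (u x)) \- (fun x => complex.Im (v x))); last by apply/funext => x; rewrite ImB.
exact: measurable_funB.
Qed.

Lemma cmeasM (u v : X -> R[i]) : cmeasurable u -> cmeasurable v -> cmeasurable (fun x => u x * v x).
Proof.
move=> [u1 u2] [v1 v2]; split.
  rewrite (_ : (fun x => _) = (fun x => complex.Re (u x) * complex.Re (v x)) \- (fun x => complex.Im (u x) * complex.Im (v x))); last by apply/funext => x; rewrite ReM.
  by apply: measurable_funB; apply: measurable_funM.
rewrite (_ : (fun x => _) = (fun x => complex.Re (u x) * complex.Im (v x)) \+ (fun x => complex.Im (u x) * complex.Re (v x))); last by apply/funext => x; rewrite ImM.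
by apply: measurable_funD; apply: measurable_funM.
Qed.

Lemma cint_sub (u v : X -> R[i]) : cintegrable mu u -> cintegrable mu v ->
  cintegrable mu (fun x => u x - v x) /\ cint mu (fun x => u x - v x) = cint mu u - cint mu v.
Proof.
move=> [u1 u2] [v1 v2].
have [a1 a2] := rint_sub _ _ u1 v1.
have [b1 b2] := rint_sub _ _ u2 v2.
rewrite /cintegrable /cint.
rewrite (_ : (fun x => (complex.Re (u x - v x))%:E) = (fun x => (complex.Re (u x) - complex.Re (v x))%:E)); last by apply/funext => x; rewrite ReB.
rewrite (_ : (fun x => (complex.Im (u x - v x))%:E) = (fun x => (complex.Im (u x) - complex.Im (v x))%:E)); last by apply/funext => x; rewrite ImB.
by rewrite a2 b2 cplxB; split => //; split.
Qed.


Lemma cint_conj (u : X -> R[i]) : cintegrable mu u ->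
  cintegrable mu (fun x => (u x)^*) /\ cint mu (fun x => (u x)^*) = (cint mu u)^*.
Proof.
move=> [u1 u2].
have [a1 a2] := rint_opp _ u2.
rewrite /cintegrable /cint.
rewrite (_ : (fun x => (complex.Re (u x)^*)%:E) = (fun x => (complex.Re (u x))%:E)); last by apply/funext => x; rewrite ReC.
rewrite (_ : (fun x => (complex.Im (u x)^*)%:E) = (fun x => (- complex.Im (u x))%:E)); last by apply/funext => x; rewrite ImC.
by rewrite a2; split.
Qed.

Lemma cint_ae (u v : X -> R[i]) : cintegrable mu u -> cmeasurable v ->
  {ae mu, forall x, u x = v x} ->
  cintegrable mu v /\ cint mu v = cint mu u.
Proof.
move=> [u1 u2] [v1 v2] ae.
have [a1 a2] := rint_ae _ _ u1 v1 (filterS (fun x (h : u x = v x) => congr1 (@complex.Re R) h) ae).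
have [b1 b2] := rint_ae _ _ u2 v2 (filterS (fun x (h : u x = v x) => congr1 (@complex.Im R) h) ae).
by rewrite /cint a2 b2; split.
Qed.

End H.

Theorem proposition5p2 (R : realType) (V : lmodType R[i]) (ip : V -> V -> R[i])
  (D : V -> Prop) (p : nat -> V -> R)
  (d : measure_display) (X : measurableType d) (mu : {measure set X -> \bar R})
  (om th : X -> V -> R[i]) (m1 m2 : X -> R[i]) :
  rigged_reflexive_frechet ip D p ->
  sigma_finite setT mu ->
  riesz_distribution_basis ip D p mu om ->
  dual_basis ip D p mu om th ->
  cmeasurable m1 -> cmeasurable m2 ->
  Ldagger ip D (mult_graph ip D mu om th m1) ->
  Ldagger ip D (mult_graph ip D mu om th m2) ->
  forall f : V, D f ->
    (exists h : V, mult_graph ip D mu om th (fun x => m1 x * m2 x) f h) /\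
    (forall h1 h2 : V, mult_graph ip D mu om th m2 f h1 ->
       mult_graph ip D mu om th m1 h1 h2 ->
       mult_graph ip D mu om th (fun x => m1 x * m2 x) f h2).
Proof.
move=> [[[_ ipC _ _] _] _ _ _ _] _ [[[_ omM] _] Hind] [[[_ thM] _] Hdual] Hm1 Hm2
  [_ Dom1 Ran1 Adj1 AdjD1] [_ Dom2 Ran2 Adj2 AdjD2] f Df.
have thM' : forall g, D g -> cmeasurable (fun x => th x g).
  by move=> g Dg; apply: cmeas_conj'; exact: thM.
have key : forall g k, D g -> adjoint ip (mult_graph ip D mu om th m1) g k ->
    {ae mu, forall x, th x k = m1 x * th x g}.
  move=> g k Dg Hk.
  have Dk := AdjD1 g k Dg Hk.
  have H0 := Hind (fun x => th x k - m1 x * th x g).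
  have : {ae mu, forall x, th x k - m1 x * th x g = 0}.
    apply: H0.
      by apply: cmeasB; [exact: thM'|apply: cmeasM => //; exact: thM'].
    move=> h Dh.
    have [h' Mh'] := (Dom1 h).2 Dh.
    have [_ int1 _ eq1] := Mh'.
    have ehk := Hk h h' Mh'.
    have [di de] := Hdual k h Dk Dh.
    have [ci ce] := cint_conj mu _ di.
    have E1 : (fun x => ((th x k)^* * om x h)^*) = (fun x => th x k * (om x h)^*).
      by apply/funext => x; rewrite rmorphM /= conjCK.
    rewrite E1 in ci ce.
    have [si se] := cint_sub mu _ _ ci (int1 g Dg).
    have E2 : (fun x => th x k * (om x h)^* - m1 x * (om x h)^* * th x g) =
              (fun x => (th x k - m1 x * th x g) * (om x h)^*).
      by apply/funext => x; ring.
    rewrite E2 in si se; split => //.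
    by rewrite se ce -de -(eq1 g Dg) ehk (ipC k h) subrr.
  by apply: filterS => x /eqP; rewrite subr_eq0 => /eqP.
have part2 : forall h1 h2 : V, mult_graph ip D mu om th m2 f h1 ->
       mult_graph ip D mu om th m1 h1 h2 ->
       mult_graph ip D mu om th (fun x => m1 x * m2 x) f h2.
  move=> h1 h2 M2f M1h.
  have [_ int2 _ eq2] := M2f.
  have [_ _ [c Hc] eq3] := M1h.
  have G : forall g, D g ->
     cintegrable mu (fun x => m1 x * m2 x * (om x f)^* * th x g) /\
     cint mu (fun x => m1 x * m2 x * (om x f)^* * th x g) = ip h2 g.
    move=> g Dg.
    have [k Hk] := Adj1 g Dg.
    have Dk := AdjD1 g k Dg Hk.
    have aeK := key g k Dg Hk.
    have aeV : {ae mu, forall x, m2 x * (om x f)^* * th x k = m1 x * m2 x * (om x f)^* * th x g}.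
      by move: aeK; apply: filterS => x ->; ring.
    have [ai ae] := cint_ae mu _ _ (int2 k Dk)
      (cmeasM _ _ (cmeasM _ _ (cmeasM _ _ Hm1 Hm2) (omM f Df)) (thM' g Dg)) aeV.
    split => //.
    by rewrite ae -eq2 // (Hk h1 h2 M1h).
  split => //.
  - by move=> g Dg; case: (G g Dg).
  - exists c => g Dg; have [_ ->] := G g Dg; rewrite eq3 //; exact: Hc.
  - by move=> g Dg; case: (G g Dg).
split => //.
have [h1 M2f] := (Dom2 f).2 Df.
have Dh1 := Ran2 f h1 M2f.
have [h2 M1h] := (Dom1 h1).2 Dh1.
exists h2; exact: part2 M2f M1h.
Qed.
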